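(* Let $d\ge1$, $n\ge 2d+3$, and let $M$ be a missing $d$-face of $\mathcal{C}(\partial C_{2d+1}(n))$. Then $(\Delta_{2d+2})^{\le d}$ is a minor of $\mathcal{C}(\partial C_{2d+1}(n))^{\le d}\cup\{M\}$.
   Context: $\mathcal{C}(\partial C_{2d+1}(n))$ is the boundary complex of the cyclic $(2d+1)$-polytope on vertex set $[n]$; by Gale's evenness condition it is the simplicial complex on $[n]$ whose maximal simplices are the $(2d+1)$-element sets $S\subseteq[n]$ such that for all $i<j$ in $[n]\setminus S$ the number of elements of $S$ strictly between $i$ and $j$ is even. $K^{\le k}$ is the subcomplex of simplices of dimension at most $k$ (dimension of $F$ is $|F|-1$). A missing $k$-face of $K$ is a $(k+1)$-subset $M\subseteq V(K)$ with $M\notin K$ but all proper subsets of $M$ in $K$. $\Delta_m$ is the complex of all subsets of an $(m+1)$-element set. Minors (Nevo): a deletion replaces $K$ by a subcomplex; an admissible contraction identifies two distinct vertices $u,v$ of $K$ such that no missing $k$-face of $K$ with $k\le\dim K$ contains both $u$ and $v$, producing $L=\{F\in K: u\notin F\}\cup\{(F\setminus\{u\})\cup\{v\}: u\in F\in K\}$. $L$ is a minor of $K$ if it is obtained (up to isomorphism) from $K$ by a finite sequence of deletions and admissible contractions. *)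

(* Defs.v *)
From mathcomp Require Import all_boot.
Set Implicit Arguments. Unset Strict Implicit. Unset Printing Implicit Defensive.

Section Complexes.
Variable T : finType.
Implicit Types (K L : {set {set T}}) (F G M : {set T}) (u v : T).

Definition is_complex K : Prop :=
  forall F G, F \in K -> G \subset F -> G \in K.

Definition vertices K : {set T} := [set x | [set x] \in K].

Definition max_face_size K : nat := \max_(F in K) #|F|.

(* K^{<= k}: faces of dimension at most k, i.e. of size at most k+1 *)
Definition skeleton (k : nat) K : {set {set T}} := [set F in K | #|F| <= k.+1].

Definition missing_face K M : Prop :=
  M \subset vertices K /\ M \notin K /\ (forall N : {set T}, N \proper M -> N \in K).

Definition missing_kface (k : nat) K M : Prop :=
  #|M| = k.+1 /\ missing_face K M.

Definition contract K u v : {set {set T}} :=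
  [set F in K | u \notin F] :|: [set (F :\ u) :|: [set v] | F in K & u \in F].

Definition admissible_contraction K u v : Prop :=
  [/\ u != v, u \in vertices K, v \in vertices K &
      forall M : {set T}, missing_face K M -> #|M| <= max_face_size K ->
        ~ (u \in M /\ v \in M)].

Inductive minor_step K : {set {set T}} -> Prop :=
  | MS_delete L : is_complex L -> L \subset K -> minor_step K L
  | MS_contract u v : admissible_contraction K u v -> minor_step K (contract K u v).

Inductive minor_steps K : {set {set T}} -> Prop :=
  | MSS_refl : minor_steps K K
  | MSS_step L L' : minor_steps K L -> minor_step L L' -> minor_steps K L'.
End Complexes.

Definition isomorphic (T T' : finType) (K : {set {set T}}) (L : {set {set T'}}) : Prop :=
  exists f : T -> T', {in vertices K &, injective f} /\ L = [set f @: (F : {set T}) | F in K].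

Definition is_minor (T' : finType) (L : {set {set T'}}) (T : finType) (K : {set {set T}}) : Prop :=
  exists K' : {set {set T}}, minor_steps K K' /\ isomorphic K' L.

(* Gale's evenness condition for S subset of [n] = {0,...,n-1}, #|S| = m *)
Definition gale_facet (n m : nat) (S : {set 'I_n}) : bool :=
  (#|S| == m) &&
  [forall i : 'I_n, forall j : 'I_n,
     ((i \notin S) && (j \notin S) && (i < j)) ==>
       ~~ odd #|[set k in S | (i < k) && (k < j)]|].

Definition cyclic_boundary (d n : nat) : {set {set 'I_n}} :=
  [set F : {set 'I_n} | [exists S : {set 'I_n}, @gale_facet n (2 * d + 1) S && (F \subset S)]].

Definition simplex (m : nat) : {set {set 'I_m.+1}} := [set: {set 'I_m.+1}].

(* Main.v *)
Require Import Defs.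
From mathcomp Require Import all_boot zify.
Set Implicit Arguments. Unset Strict Implicit. Unset Printing Implicit Defensive.

Definition miss n (W G : {set 'I_n}) : bool :=
  [forall x in G, [exists y in W, y < x]] &&
  [forall x in G, [exists y in W, x < y]] &&
  [forall x in G, forall y in G, (x < y) ==> [exists z in W, (x < z) && (z < y)]].

Lemma oddE m : odd m = (m %% 2 == 1).
Proof. by rewrite modn2; case: odd. Qed.

Section Gale.
Variable n : nat.
Implicit Types (S F A : {set 'I_n}).

Definition galeok S := [forall i : 'I_n, forall j : 'I_n,
     ((i \notin S) && (j \notin S) && (i < j)) ==>
       ~~ odd #|[set k in S | (i < k) && (k < j)]|].

Lemma galeokP S : reflect (forall i j : 'I_n, i \notin S -> j \notin S -> i < j ->
   ~~ odd #|[set k in S | (i < k) && (k < j)]|) (galeok S).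
Proof.
apply: (iffP forallP) => [H i j Hi Hj Hij | H i].
  by have /forallP/(_ j)/implyP := H i; apply; rewrite Hi Hj Hij.
apply/forallP => j; apply/implyP => /andP[/andP[Hi Hj] Hij]; exact: H.
Qed.

Lemma invol_even A (p : 'I_n -> 'I_n) :
  (forall k, k \in A -> [/\ p k \in A, p (p k) = k & p k != k]) -> ~~ odd #|A|.
Proof.
move=> H.
set A1 := [set k in A | k < p k].
set A2 := [set k in A | p k < k].
have UA : A = A1 :|: A2.
  apply/setP => k; rewrite !inE; case kA: (k \in A) => //=.
  have [_ _ ne] := H k kA.
  have : val k != val (p k) by rewrite eq_sym.
  by rewrite neq_ltn.
have D : A1 :&: A2 = set0.
  apply/setP => k; rewrite !inE; apply/negbTE; apply/negP => /andP[/andP[_ h1] /andP[_ h2]].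
  by move: (ltn_trans h1 h2); rewrite ltnn.
have E : p @: A1 = A2.
  apply/setP => k; apply/imsetP/idP.
  - case=> j; rewrite !inE => /andP[jA jl] ->.
    have [pA ppj _] := H j jA. by rewrite pA ppj jl.
  - rewrite !inE => /andP[kA kl]. have [pA ppk _] := H k kA.
    exists (p k); last by rewrite ppk. by rewrite !inE pA ppk kl.
have I : {in A1 &, injective p}.
  move=> x y; rewrite !inE => /andP[xA _] /andP[yA _] e.
  have [_ px _] := H x xA; have [_ py _] := H y yA. by rewrite -px e py.
by rewrite UA cardsU D cards0 subn0 -E card_in_imset // addnn odd_double.
Qed.

Definition blk (e : nat) (x y : 'I_n) : bool := (y + e)./2 == (x + e)./2.
Definition Sblk e F := [set y : 'I_n | [exists x in F, blk e x y]].

Lemma galeok_Sblk e F : galeok (Sblk e F).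
Proof.
apply/galeokP => i j Hi Hj Hij.
pose p (k : 'I_n) : 'I_n := insubd k (if odd (k + e) then k.-1 else k.+1).
have pv : forall k : 'I_n, (if odd (k + e) then k.-1 else k.+1) < n ->
    (p k : nat) = (if odd (k + e) then k.-1 else k.+1).
  by move=> k hk; rewrite /p val_insubd hk.
apply: (invol_even (p:=p)) => k; rewrite inE => /andP[kS /andP[ik kj]].
have pk := pv k (ltac:(have := ltn_ord j; case: odd; lia)).
have bk : blk e k (p k).
  rewrite /blk pk; apply/eqP. case: ifP => H. lia. lia.
have pkS : p k \in Sblk e F.
  move: kS; rewrite !inE => /exists_inP[x xF bx]; apply/exists_inP; exists x => //.
  by rewrite /blk (eqP bk).
have h1 : (i : nat) != p k by apply: contraNneq Hi => /val_inj ->.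
have h2 : (j : nat) != p k by apply: contraNneq Hj => /val_inj ->.
split.
- rewrite inE pkS /=; move: pk h1 h2; case: ifP; lia.
- have ppk : (if odd (p k + e) then (p k).-1 else (p k).+1) = k.
    by move: pk; case: ifP => H1 ->; case: ifP; lia.
  by apply: val_inj => /=; rewrite (pv (p k)) ppk...
- apply/eqP => /(congr1 (@nat_of_ord n)); move: pk; case: ifP; lia.
Qed.

Lemma card_bigcup_le (F : {set 'I_n}) (B : 'I_n -> {set 'I_n}) :
  #|\bigcup_(x in F) B x| <= \sum_(x in F) #|B x|.
Proof.
elim: {F}_.+1 {-2}F (ltnSn #|F|) => // k IH F HF.
case: (set_0Vmem F) => [->|[x xF]]; first by rewrite big_set0 cards0.
rewrite (big_setD1 x xF) (big_setD1 x xF) /=.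
apply: leq_trans (leq_card_setU _ _) _; rewrite leq_add2l; apply: IH.
by move: HF; rewrite (cardsD1 x F) xF.
Qed.

Lemma Sblk_bigcup e F : Sblk e F = \bigcup_(x in F) [set y | blk e x y].
Proof.
apply/setP => y; rewrite inE; apply/exists_inP/bigcupP => [[x xF bx]|[x xF]].
  by exists x => //; rewrite inE.
by rewrite inE => bx; exists x.
Qed.

Lemma card_blk2 e x : #|[set y | blk e x y]| <= 2.
Proof.
set D := [set y | blk e x y].
have inj : {in D &, injective (fun y : 'I_n => odd (y + e))}.
  move=> y1 y2; rewrite !inE /blk => /eqP h1 /eqP h2 h; apply: val_inj => /=; lia.
rewrite -(card_in_imset inj).
apply: leq_trans (subset_leq_card (subsetT _)) _.
by rewrite cardsT card_bool.
Qed.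

Lemma card_blk1 e x : (forall y, blk e x y -> y = x) -> #|[set y | blk e x y]| <= 1.
Proof.
move=> H; rewrite -(cards1 x); apply: subset_leq_card; apply/subsetP => y.
by rewrite !inE => /H ->.
Qed.

Lemma sum_blk e F : \sum_(x in F) #|[set y | blk e x y]| <= 2 * #|F|.
Proof.
rewrite -sum1_card big_distrr /=; apply: leq_sum => x _; rewrite muln1; exact: card_blk2.
Qed.

Lemma pad S m : galeok S -> #|S| <= m <= n ->
  exists S', [/\ S \subset S', galeok S' & #|S'| = m].
Proof.
move=> g /andP[h1 h2].
move: {2}(m - #|S|) (erefl (m - #|S|)) => k.
elim: k S g h1 => [|k IH] S g h1 Ek.
  by exists S; split => //; lia.
have [a0 a0S] : exists a, a \notin S.
  case: (pickP (fun a => a \notin S)) => [a0 a0S|none]; first by exists a0.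
  have : S = setT by apply/setP => a; rewrite inE; have := none a => /= /negbFE.
  move=> SE; move: Ek h2; rewrite SE cardsT card_ord; lia.
case: (@arg_minnP _ a0 (fun a => a \notin S) (fun a : 'I_n => val a) a0S) => a aS amin.
have g' : galeok (a |: S).
  apply/galeokP => i j; rewrite !inE !negb_or => /andP[ia iS] /andP[ja jS] ij.
  have ai : a < i.
    have := amin i iS; rewrite leq_eqVlt => /orP[/eqP/val_inj E|//].
    by move: ia; rewrite E eqxx.
  rewrite (_ : [set k in a |: S | _] = [set k in S | (i < k) && (k < j)]).
    exact: (galeokP _ g).
  apply/setP => t; rewrite !inE; case: (eqVneq t a) => [->|ta] //=.
  by rewrite (negbTE aS) ltnNge (ltnW ai).
have [S' [sub g2 c2]] := IH (a |: S) g' (ltac:(rewrite cardsU1 aS; lia))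
   (ltac:(rewrite cardsU1 aS; lia)).
exists S'; split => //; apply: subset_trans sub; exact: subsetUr.
Qed.

Lemma gale_facetE m S : gale_facet m S = (#|S| == m) && galeok S.
Proof. by []. Qed.

Lemma face_of d F : 2*d+3 <= n ->
  (#|F| <= d) || ((#|F| == d.+1) && ~~ miss [set: 'I_n] F) -> F \in cyclic_boundary d n.
Proof.
move=> hn hF.
suff [S [gS FS cS]] : exists S, [/\ galeok S, F \subset S & #|S| <= 2*d+1].
  have [S' [sub g' c']] := @pad S (2*d+1) gS (ltac:(apply/andP; split; lia)).
  rewrite inE; apply/existsP; exists S'; rewrite gale_facetE c' eqxx g' /=.
  exact: subset_trans FS sub.
have FS e : F \subset Sblk e F.
  by apply/subsetP => x xF; rewrite inE; apply/exists_inP; exists x => //; rewrite /blk.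
case/orP: hF => [hF|/andP[/eqP hF hm]].
  exists (Sblk 0 F); split => //; first exact: galeok_Sblk.
  rewrite Sblk_bigcup; apply: leq_trans (card_bigcup_le _ _) _.
  apply: leq_trans (sum_blk _ _) _; lia.
have key : forall e x, x \in F -> (forall y, blk e x y -> y = x) -> #|Sblk e F| <= 2*d+1.
  move=> e x xF H; rewrite Sblk_bigcup; apply: leq_trans (card_bigcup_le _ _) _.
  rewrite (big_setD1 x xF) /=; apply: leq_trans (leq_add (card_blk1 H) (sum_blk e (F :\ x))) _.
  have := cardsD1 x F; rewrite xF hF /=; lia.
move: hm; rewrite /miss !negb_and => /orP[/orP[H|H]|H].
- move/forall_inPn: H => [x xF /exists_inPn H].
  have x0 : (x : nat) = 0.
    case E: (nat_of_ord x) => [//|m].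
    have hm : 0 < n by have := ltn_ord x; lia.
    by have := H (Ordinal hm) (in_setT _); rewrite /= E.
  exists (Sblk 1 F); split; [exact: galeok_Sblk | exact: FS | ].
  apply: (key 1 x xF) => y; rewrite /blk x0 => /eqP h; apply: val_inj => /=; lia.
- move/forall_inPn: H => [x xF /exists_inPn H].
  have x0 : (x : nat).+1 = n.
    have := ltn_ord x; rewrite leq_eqVlt => /orP[/eqP //|hm].
    by have := H (Ordinal hm) (in_setT _); rewrite /= ltnSn.
  exists (Sblk (odd x) F); split; [exact: galeok_Sblk | exact: FS | ].
  apply: (key _ x xF) => y; rewrite /blk => /eqP h; apply: val_inj => /=.
  have := ltn_ord y; lia.
- move/forall_inPn: H => [x xF /forall_inPn [y yF]].
  rewrite negb_imply => /andP[xy /exists_inPn hz].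
  have yx : (y : nat) = x.+1.
    have := ltn_ord y; have : x.+1 <= y by [].
    rewrite leq_eqVlt => /orP[/eqP -> //|hm] hy.
    have hx : x.+1 < n by lia.
    by have := hz (Ordinal hx) (in_setT _); rewrite /= ltnSn hm.
  exists (Sblk (odd x) F); split; [exact: galeok_Sblk | exact: FS | ].
  have yF' : y \in F by [].
  apply: (@leq_trans #|Sblk (odd x) (F :\ y)|).
    apply: subset_leq_card; apply/subsetP => t; rewrite !inE.
    move=> /exists_inP[w wF bw]; apply/exists_inP.
    case: (eqVneq w y) => [wy|wy]; last by exists w => //; rewrite !inE wy.
    exists x; first by rewrite !inE xF andbT; apply/eqP => E; move: xy; rewrite E ltnn.
    move: bw; rewrite /blk wy => /eqP ->; apply/eqP; lia.
  rewrite Sblk_bigcup; apply: leq_trans (card_bigcup_le _ _) _.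
  apply: leq_trans (sum_blk _ _) _; have := cardsD1 y F; rewrite yF hF /=; lia.
Qed.

End Gale.

Section Kf.
Variables (n d : nat) (M : {set 'I_n}).

Lemma missP (W G : {set 'I_n}) : reflect
  [/\ forall x, x \in G -> exists2 y, y \in W & y < x,
      forall x, x \in G -> exists2 y, y \in W & x < y &
      forall x y, x \in G -> y \in G -> x < y -> exists2 z, z \in W & x < z < y]
  (miss W G).
Proof.
rewrite /miss -andbA; apply: (iffP and3P) => [[/forall_inP h1 /forall_inP h2 /forall_inP h3]|[h1 h2 h3]]; split.
- by move=> x /h1/exists_inP.
- by move=> x /h2/exists_inP.
- move=> x y xG yG xy.
  by have /forall_inP/(_ y yG)/implyP/(_ xy)/exists_inP := h3 x xG.
- by apply/forall_inP => x /h1 /exists_inP.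
- by apply/forall_inP => x /h2 /exists_inP.
- apply/forall_inP => x xG; apply/forall_inP => y yG; apply/implyP => xy.
  by apply/exists_inP; apply: h3.
Qed.

Definition Kf (V : {set 'I_n}) : {set {set 'I_n}} :=
  [set G : {set 'I_n} | (G \subset V) &&
     ((#|G| <= d) || ((#|G| == d.+1) && (~~ miss V G || (G == M))))].

Lemma Kf_complex V : is_complex (Kf V).
Proof.
move=> F G; rewrite !inE => /andP[FV hF] GF; rewrite (subset_trans GF FV) /=.
have cGF := subset_leq_card GF.
case/orP: hF => [h|/andP[/eqP h h2]]; first by rewrite (leq_trans cGF h).
case: (ltnP #|G| d.+1) => [lt|ge]; first by rewrite -ltnS lt.
have -> : G = F by apply/eqP; rewrite eqEcard GF h.
by rewrite h eqxx h2 orbT.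
Qed.

Lemma Kf_vertices V : 1 <= d -> vertices (Kf V) = V.
Proof. by move=> hd; apply/setP => x; rewrite !inE sub1set cards1 hd /= andbT. Qed.

Lemma Kf_maxsize V : max_face_size (Kf V) <= d.+1.
Proof.
apply/bigmax_leqP => F; rewrite inE => /andP[_ /orP[h|/andP[/eqP -> _]]] //.
exact: leqW.
Qed.

Lemma miss_shift (V G : {set 'I_n}) (u v : 'I_n) : G \subset V -> v \in V -> v < u ->
  (forall z, z \in V -> z < u -> z <= v) -> miss V G -> ~~ miss (V :\ u) G ->
  v \in G /\ ~~ miss V (u |: (G :\ v)).
Proof.
move=> GV vV vu adj /missP[m1 m2 m3] nm.
have neq : v != u by apply/eqP => E; move: vu; rewrite E ltnn.
have vVu : v \in V :\ u by rewrite !inE vV andbT.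
have lt_v : forall x, x \in V -> x < u -> x != v -> x < v.
  move=> x xV xu xv; rewrite ltn_neqAle adj // andbT (inj_eq (@ord_inj n)) //.
have inG x : x \in G -> x \in V by move/(subsetP GV).
have m1' : forall x, x \in G -> exists2 y, y \in V :\ u & y < x.
  move=> x xG; have [y yV yx] := m1 x xG.
  case: (eqVneq y u) => [yu|yu]; last by exists y => //; rewrite !inE yu yV.
  by exists v => //; subst y; exact: ltn_trans vu yx.
case vG: (v \in G); last first.
  move/negP: nm; case; apply/missP; split.
  - exact: m1'.
  - move=> x xG; have [y yV xy] := m2 x xG.
    case: (eqVneq y u) => [yu|yu]; last by exists y => //; rewrite !inE yu yV.
    subst y; exists v => //; apply: lt_v => //; first exact: inG.
    by apply: contraFneq vG => <-.
  - move=> x y xG yG xy; have [z zV /andP[xz zy]] := m3 x y xG yG xy.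
    case: (eqVneq z u) => [zu|zu]; last by exists z; rewrite ?inE ?zu ?zV ?xz ?zy.
    subst z; exists v => //; rewrite (ltn_trans vu zy) andbT; apply: lt_v => //.
      exact: inG.
    by apply: contraFneq vG => <-.
split => //; apply/negP => /missP[f1 f2 f3].
move/negP: nm; case; apply/missP; split.
- exact: m1'.
- move=> x xG; case: (eqVneq x v) => [xv|xv].
    have [y yV uy] := f2 u (setU11 _ _); exists y; last by subst x; exact: ltn_trans vu uy.
    by rewrite !inE yV andbT; apply/eqP => E; move: uy; rewrite E ltnn.
  have [y yV xy] := m2 x xG.
  case: (eqVneq y u) => [yu|yu]; last by exists y => //; rewrite !inE yu yV.
  subst y; exists v => //; apply: lt_v => //; exact: inG.
- move=> x y xG yG xy; have [z zV /andP[xz zy]] := m3 x y xG yG xy.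
  case: (eqVneq z u) => [zu|zu]; last by exists z; rewrite ?inE ?zu ?zV ?xz ?zy.
  subst z; case: (eqVneq x v) => [xv|xv]; last first.
    exists v => //; rewrite (ltn_trans vu zy) andbT; apply: lt_v => //; exact: inG.
  subst x.
  have yF : y \in u |: (G :\ v).
    by rewrite !inE yG andbT; apply/orP; right; apply/eqP => E; move: xy; rewrite E ltnn.
  have [z2 z2V /andP[uz zy2]] := f3 u y (setU11 _ _) yF zy.
  exists z2; last by rewrite zy2 (ltn_trans vu uz).
  by rewrite !inE z2V andbT; apply/eqP => E; move: uz; rewrite E ltnn.
Qed.

Lemma contr_step (V : {set 'I_n}) (u v : 'I_n) : 1 <= d -> u \in V -> v \in V -> v < u -> u \notin M ->
  (forall z, z \in V -> z < u -> z <= v) ->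
  admissible_contraction (Kf V) u v /\ Kf (V :\ u) \subset contract (Kf V) u v.
Proof.
move=> hd uV vV vu uM adj.
have neq : u != v by apply/eqP => E; move: vu; rewrite E ltnn.
split.
  split => //; rewrite ?Kf_vertices //.
  move=> N [NV [NK _]] hs [uN vN].
  rewrite Kf_vertices // in NV.
  have hs' := leq_trans hs (Kf_maxsize V).
  move: NK; rewrite inE NV /= negb_or => /andP[h1].
  have e : #|N| == d.+1 by rewrite eqn_leq hs' ltnNge h1.
  rewrite e /= negb_or negbK => /andP[/missP[_ _ m3] _].
  have [z zV /andP[vz zu]] := m3 v u vN uN vu.
  by have := adj z zV zu; rewrite leqNgt vz.
apply/subsetP => G; rewrite inE => /andP[GVu hG].
have GV : G \subset V by apply: subset_trans GVu (subD1set _ _).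
have uG : u \notin G by apply/negP => /(subsetP GVu); rewrite !inE eqxx.
case GK: (G \in Kf V).
  by apply/setUP; left; rewrite inE GK uG.
move: GK; rewrite inE GV /= => /negbT; rewrite negb_or => /andP[hd1].
move: hG; rewrite (negbTE hd1) /= => /andP[e hG].
rewrite e /= negb_or negbK => /andP[mG GM].
move: hG; rewrite (negbTE GM) orbF => nmG.
have [vG nmF] := miss_shift GV vV vu adj mG nmG.
apply/setUP; right; apply/imsetP; exists (u |: (G :\ v)).
  rewrite inE setU11 andbT inE nmF /= andbT.
  have -> : #|u |: (G :\ v)| = d.+1.
    rewrite cardsU1 !inE negb_and uG orbT /=.
    have h := cardsD1 v G; rewrite vG (eqP e) add1n in h; by rewrite add1n h.
  rewrite eqxx orbT andbT subUset sub1set uV /=.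
  exact: subset_trans (subD1set _ _) GV.
apply/setP => t; rewrite !inE.
case: (eqVneq t v) => [->|tv]; first by rewrite vG orbT.
case: (eqVneq t u) => [->|tu] /=; first by rewrite (negbTE uG).
by rewrite orbF.
Qed.
End Kf.

Lemma mst_trans (T : finType) (K L L' : {set {set T}}) :
  minor_steps K L -> minor_steps L L' -> minor_steps K L'.
Proof. by move=> h1 h2; elim: h2 => // L1 L2 _ IH st; exact: MSS_step IH st. Qed.

Lemma spaced k N (A : {set 'I_N}) :
  (forall t, t \in A -> 1 <= t <= 2*k+1) ->
  (forall t t', t \in A -> t' \in A -> t < t' -> t.+2 <= t') ->
  #|A| = k.+1 -> forall t, t \in A -> odd t.
Proof.
move=> h1 h2 hc t0 tA; apply/negPn/negP => ev.
have b0 := h1 t0 tA.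
pose c := (t0./2).-1.
have cb : c < k.+1 by rewrite /c; lia.
pose g (t : 'I_N) : 'I_k.+1 := inord (if t < t0 then (t.-1)./2 else t./2).
have gv : forall t, t \in A -> (g t : nat) = (if t < t0 then (t.-1)./2 else t./2).
  move=> t tA'; rewrite /g inordK //; have := h1 t tA'; case: ifP; lia.
have inj : {in A &, injective g}.
  move=> t t' tA' t'A /(congr1 (@nat_of_ord _)); rewrite !gv // => E.
  apply: val_inj => /=.
  have b1 := h1 t tA'; have b2 := h1 t' t'A.
  move: E; case: (ltnP t t0) => a; case: (ltnP t' t0) => b => /= E.
  - case: (ltngtP t t') => [lt|gt|//].
      have := h2 _ _ tA' t'A lt; lia.
    have := h2 _ _ t'A tA' gt; lia.
  - have := h2 _ _ tA' tA a; lia.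
  - have := h2 _ _ t'A tA b; lia.
  - case: (ltngtP t t') => [lt|gt|//].
      have := h2 _ _ tA' t'A lt; lia.
    have := h2 _ _ t'A tA' gt; lia.
have sub : g @: A \subset [set~ (inord c : 'I_k.+1)].
  apply/subsetP => _ /imsetP[t tA' ->]; rewrite !inE; apply/eqP => /(congr1 (@nat_of_ord _)).
  rewrite gv // inordK // /c.
  case: (ltngtP t t0) => [lt|gt|eq].
  - have := h2 _ _ tA' tA lt; have := h1 t tA'; lia.
  - lia.
  - lia.
have := subset_leq_card sub; rewrite cardsC1 card_ord card_in_imset // hc /=; lia.
Qed.

Section Final.
Variables (n d : nat) (M : {set 'I_n.+1}).
Hypotheses (hd : 1 <= d) (cM : #|M| = d.+1) (mM : miss [set: 'I_n.+1] M).

Definition S1 := [set (inord (nat_of_ord m).+1 : 'I_n.+1) | m in M].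
Definition Vs := ord0 |: (M :|: S1).

Lemma mb m : m \in M -> 0 < m.
Proof. by move=> mM'; move/missP: mM => [h _ _]; have [y _ ] := h m mM'; lia. Qed.
Lemma mt m : m \in M -> m < n.
Proof. by move=> mM'; move/missP: mM => [_ h _]; have [y _ ] := h m mM'; have := ltn_ord y; lia. Qed.
Lemma mp m m' : m \in M -> m' \in M -> m < m' -> m.+1 < m'.
Proof.
move=> a b c; move/missP: mM => [_ _ h]; have [z _ /andP[]] := h m m' a b c; lia.
Qed.

Lemma S1v m : m \in M -> ((inord (nat_of_ord m).+1 : 'I_n.+1) : nat) = m.+1.
Proof. by move=> mM'; rewrite inordK //; have := mt mM'; lia. Qed.

Lemma MS1 : M :&: S1 = set0.
Proof.
apply/setP => x; rewrite !inE; apply/negbTE/negP => /andP[xM /imsetP[m mM' E]].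
have := S1v mM'; rewrite -E => xv.
have := mp mM' xM; rewrite xv ltnSn => /(_ isT); lia.
Qed.

Lemma cardS1 : #|S1| = d.+1.
Proof.
rewrite card_in_imset -?cM // => x y xM yM /(congr1 (@nat_of_ord _)).
by rewrite !S1v // => -[] /val_inj.
Qed.

Lemma cardVs : #|Vs| = 2*d+3.
Proof.
rewrite /Vs cardsU1 cardsU MS1 cards0 cM cardS1 !inE.
have -> : (ord0 \in M) = false by apply/negbTE/negP => /mb.
have -> : (ord0 \in S1) = false.
  by apply/negbTE/negP => /imsetP[m mM' /(congr1 (@nat_of_ord _))]; rewrite S1v.
rewrite /=; lia.
Qed.

Definition rk (y : 'I_n.+1) := #|[set k in M | k < y]|.
Definition fn (y : 'I_n.+1) := 2 * rk y + (y \in M).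

Lemma rk_le (y : 'I_n.+1) : rk y <= d.+1.
Proof. by rewrite -cM; apply: subset_leq_card; apply/subsetP => k; rewrite inE => /andP[]. Qed.

Lemma rkM (y : 'I_n.+1) : y \in M -> rk y <= d.
Proof.
move=> yM; have: rk y < #|M|; last by rewrite cM.
apply: proper_card; rewrite properE; apply/andP; split.
  by apply/subsetP => k; rewrite inE => /andP[].
by apply/subsetP => /(_ y yM); rewrite inE ltnn andbF.
Qed.

Lemma rk_strict (y y' m : 'I_n.+1) : m \in M -> y <= m -> m < y' -> rk y < rk y'.
Proof.
move=> mM' a b; apply: proper_card; rewrite properE; apply/andP; split.
  by apply/subsetP => k; rewrite !inE => /andP[-> /=] h; lia.
by apply/subsetP => /(_ m); rewrite !inE mM' b ltnNge a => /(_ isT).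
Qed.

Lemma fn_le (y : 'I_n.+1) : fn y <= 2*d+2.
Proof.
rewrite /fn; case yM: (y \in M); first by have := rkM yM; lia.
by have := rk_le y; lia.
Qed.

Lemma fn_strict (y y' : 'I_n.+1) : y \in Vs -> y' \in Vs -> y < y' -> fn y < fn y'.
Proof.
move=> yV y'V lt; rewrite /fn.
case yM: (y \in M).
  have := rk_strict yM (leqnn _) lt; case: (y' \in M); lia.
case y'M: (y' \in M).
  have : rk y <= rk y'.
    by apply: subset_leq_card; apply/subsetP => k; rewrite !inE => /andP[-> /=] h; lia.
  lia.
move: y'V; rewrite !inE y'M /= => /orP[/eqP E|/imsetP[m mM' E]].
  by move: lt; rewrite E.
have := S1v mM'; rewrite -E => y'v.
have : rk y < rk y'.
  apply: (rk_strict mM'); last by rewrite y'v.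
  by move: lt; rewrite y'v.
lia.
Qed.

Lemma fn_mono (y y' : 'I_n.+1) : y \in Vs -> y' \in Vs -> y <= y' -> fn y <= fn y'.
Proof.
move=> a b; rewrite leq_eqVlt => /orP[/eqP E|lt].
  by have -> : y = y' by apply: val_inj.
exact: ltnW (fn_strict a b lt).
Qed.

Definition f (y : 'I_n.+1) : 'I_(2*d+2).+1 := inord (fn y).
Lemma fv (y : 'I_n.+1) : (f y : nat) = fn y.
Proof. by rewrite /f inordK //; have := fn_le y; lia. Qed.

Lemma f_inj : {in Vs &, injective f}.
Proof.
move=> y y' a b /(congr1 (@nat_of_ord _)); rewrite !fv => E.
apply: val_inj => /=; case: (ltngtP y y') => [lt|gt|//].
  by have := fn_strict a b lt; rewrite E ltnn.
by have := fn_strict b a gt; rewrite E ltnn.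
Qed.

Lemma f_onto : f @: Vs = setT.
Proof.
apply/eqP; rewrite eqEcard subsetT cardsT card_ord card_in_imset ?cardVs //.
by rewrite /= addn2 addn3. exact: f_inj.
Qed.

Lemma missVs (G : {set 'I_n.+1}) : G \subset Vs -> #|G| = d.+1 -> miss Vs G -> G = M.
Proof.
move=> GV cG /missP[m1 m2 m3].
have inV x : x \in G -> x \in Vs by move/(subsetP GV).
have oddG : forall x, x \in G -> odd (fn x).
  move=> x xG.
  have := @spaced d _ (f @: G) _ _ _ (f x) (imset_f _ xG); rewrite fv; apply.
  - move=> _ /imsetP[y yG ->]; rewrite fv.
    have [z zV zy] := m1 y yG; have [z' z'V yz'] := m2 y yG.
    have := fn_strict zV (inV _ yG) zy; have := fn_strict (inV _ yG) z'V yz'.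
    have := fn_le z'; lia.
  - move=> _ _ /imsetP[y yG ->] /imsetP[y' y'G ->]; rewrite !fv => lt.
    have yy' : y < y'.
      rewrite ltnNge; apply/negP => h; have := fn_mono (inV _ y'G) (inV _ yG) h; lia.
    have [z zV /andP[a b]] := m3 y y' yG y'G yy'.
    have := fn_strict (inV _ yG) zV a; have := fn_strict zV (inV _ y'G) b; lia.
  - rewrite card_in_imset // => a b aG bG; apply: f_inj; exact: inV.
have GM : G \subset M.
  apply/subsetP => x xG; have := oddG x xG; rewrite /fn.
  by case: (x \in M) => //= h; lia.
by apply/eqP; rewrite eqEcard GM cG cM /=.
Qed.

Lemma iso_final : isomorphic (Kf d M Vs) (skeleton d (simplex (2 * d + 2))).
Proof.
exists f; split; first by rewrite Kf_vertices //; exact: f_inj.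
apply/setP => H; rewrite !inE /=; apply/idP/imsetP.
  move=> cH; pose G := Vs :&: f @^-1: H.
  have fG : f @: G = H.
    apply/setP => t; apply/imsetP/idP.
      by case=> x; rewrite !inE => /andP[_ xH] ->.
    move=> tH; have : t \in f @: Vs by rewrite f_onto.
    case/imsetP => x xV E; exists x => //; by rewrite /G in_setI xV /= inE -E.
  have cG : #|G| = #|H|.
    rewrite -fG card_in_imset // => a b; rewrite /G !in_setI => /andP[a1 _] /andP[b1 _].
    exact: f_inj.
  exists G => //; rewrite inE subsetIl /= cG.
  case: (leqP #|H| d) => //= lt.
  have e : #|H| = d.+1 by apply/eqP; rewrite eqn_leq lt andbT; exact: cH.
  rewrite e eqxx /=; case m: (miss Vs G) => //=.
  have GM : G = M by apply: missVs; [exact: subsetIl | rewrite cG | exact: m].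
  by rewrite GM eqxx.
case=> G; rewrite inE => /andP[_ hG] ->.
apply: leq_trans (leq_imset_card _ _) _.
by case/orP: hG => [h|/andP[/eqP -> _]] //; exact: leqW.
Qed.

Lemma reduce (V : {set 'I_n.+1}) : Vs \subset V -> minor_steps (Kf d M V) (Kf d M Vs).
Proof.
move: {2}#|V| (leqnn #|V|) => k; elim: k V => [|k IH] V hV sub.
  have o0V : (ord0 : 'I_n.+1) \in V by apply: (subsetP sub); rewrite !inE eqxx.
  by move: hV; rewrite (cardsD1 ord0 V) o0V.
case: (eqVneq V Vs) => [->|ne]; first exact: MSS_refl.
have [u uV uVs] : exists2 u, u \in V & u \notin Vs.
  have : Vs \proper V by rewrite properEneq eq_sym ne sub.
  by case/properP => _ [u uV uVs]; exists u.
have o0V : ord0 \in V by apply: (subsetP sub); rewrite !inE eqxx.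
have u0 : 0 < u.
  rewrite lt0n; apply: contra uVs => /eqP E.
  have -> : u = ord0 by apply: val_inj.

  by rewrite !inE eqxx.
have uM : u \notin M by apply: contra uVs => uM; rewrite !inE uM orbT.
case: (@arg_maxnP _ ord0 (fun y => (y \in V) && (y < u)) (fun y => val y)) => [|v /andP[vV vu] vmax].
  by rewrite o0V u0.
have adj : forall z, z \in V -> z < u -> z <= v.
  by move=> z zV zu; apply: (vmax z); rewrite zV zu.
have [adm incl] := contr_step hd uV vV vu uM adj.
apply: mst_trans (IH (V :\ u) _ _).
- apply: MSS_step (MS_delete (Kf_complex (d:=d) (M:=M) (V:=V :\ u)) incl).
  exact: MSS_step (MSS_refl _) (MS_contract adm).
- by move: hV; rewrite (cardsD1 u V) uV.
- by rewrite subsetD1 sub uVs.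
Qed.
End Final.

Theorem lemma2p13 (d n : nat) (M : {set 'I_n}) :
  1 <= d -> 2 * d + 3 <= n ->
  missing_kface d (cyclic_boundary d n) M ->
  is_minor (skeleton d (simplex (2 * d + 2)))
           (skeleton d (cyclic_boundary d n) :|: [set M]).
Proof.
case: n M => [|n] M hd hn; first by lia.
move=> [cM [_ [MK _]]].
have mM : miss [set: 'I_n.+1] M.
  apply/negPn/negP => nm; move/negP: MK; apply; apply: face_of hn _.
  by rewrite cM eqxx nm orbT.
exists (Kf d M (Vs M)); split; last exact: iso_final.
apply: mst_trans (reduce hd (subsetT _)).
apply: MSS_step (MSS_refl _) (MS_delete (Kf_complex (d:=d) (M:=M) (V:=setT)) _).
apply/subsetP => G; rewrite inE subsetT /= => hG.
case: (eqVneq G M) => [->|GM]; first by rewrite !inE eqxx orbT.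
have h : (#|G| <= d) || ((#|G| == d.+1) && ~~ miss setT G).
  by move: hG; rewrite (negbTE GM) orbF.
apply/setUP; left; rewrite inE (face_of hn h) /=.
by case/orP: h => [h|/andP[/eqP -> _]] //; exact: leqW.
Qed.
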